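(* Let $p$ be a prime, $n>1$, $\alpha_0,\dots,\alpha_{n-1}\in\mathbb{L}_p$, and let $A\in\mathbb{L}_p^{n\times n}$ be the matrix whose transpose $A^T$ is the companion matrix of $-\alpha_0-\alpha_1t-\dots-\alpha_{n-1}t^{n-1}+t^n$. Then the linear cellular automaton over $(\mathbb{Z}/p\mathbb{Z})^n$ with associated matrix $A$ is positively expansive if and only if the linear cellular automaton over $(\mathbb{Z}/p\mathbb{Z})^n$ with associated matrix $A^T$ is positively expansive.
   Context: $\mathbb{L}_p=\mathbb{Z}/p\mathbb{Z}[X,X^{-1}]$. The companion matrix of a monic polynomial $\beta_0+\dots+\beta_{n-1}t^{n-1}+t^n$ is the $n\times n$ matrix with ones on the subdiagonal, last column $(-\beta_0,\dots,-\beta_{n-1})^T$, and zeros elsewhere. The linear cellular automaton over $(\mathbb{Z}/p\mathbb{Z})^n$ with associated matrix $\sum_{j=-r}^rA_jX^{-j}$ ($A_j\in(\mathbb{Z}/p\mathbb{Z})^{n\times n}$) is the map $\mathcal{F}(c)_i=\sum_{j=-r}^rA_jc_{i+j}$ on $((\mathbb{Z}/p\mathbb{Z})^n)^{\mathbb{Z}}$ with metric $d(c,c')=2^{-\min\{|j|:c_j\neq c'_j\}}$ ($d(c,c)=0$); it is positively expansive if there is $\varepsilon>0$ such that for all $c\neq c'$ some $\ell\in\mathbb{N}$ gives $d(\mathcal{F}^\ell(c),\mathcal{F}^\ell(c'))\geq\varepsilon$. *)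

(* Defs.v *)
From Stdlib Require Import Reals ClassicalEpsilon.
From mathcomp Require Import all_boot all_algebra.
Set Implicit Arguments. Unset Strict Implicit. Unset Printing Implicit Defensive.
Import GRing.Theory.

(* Laurent polynomials over Z/pZ:  Laurent k q  represents  X^{-k} * q(X). *)
Record laurent (p : nat) := Laurent { lshift : nat; lpoly : {poly 'F_p} }.

Section Laurent.
Variable p : nat.
Local Open Scope ring_scope.

Definition lcoef (a : laurent p) (m : int) : 'F_p :=
  match (m + (lshift a)%:Z)%R with
  | Posz k => (lpoly a)`_k
  | Negz _ => 0
  end.

Definition lzero : laurent p := Laurent 0 0.
Definition lone : laurent p := Laurent 0 1.
Definition lneg (a : laurent p) : laurent p := Laurent (lshift a) (- lpoly a).

(* all nonzero coefficients of a sit at exponents m with |m| <= lradius a *)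
Definition lradius (a : laurent p) : nat := maxn (lshift a) (size (lpoly a)).

(* companion matrix of  beta_0 + ... + beta_{n-1} t^{n-1} + t^n :
   ones on the subdiagonal, last column (-beta_0,...,-beta_{n-1})^T *)
Definition companion (n : nat) (beta : 'I_n -> laurent p) : 'M[laurent p]_n :=
  \matrix_(i, j) if j.+1 == n then lneg (beta i)
                 else if i == j.+1 :> nat then lone else lzero.

Definition config (n : nat) := int -> 'cV['F_p]_n.

(* A = sum_j A_j X^{-j} : A_j is the matrix of coefficients of X^{-j} *)
Definition coefmx (n : nat) (A : 'M[laurent p]_n) (m : int) : 'M['F_p]_n :=
  \matrix_(k, l) lcoef (A k l) m.

Definition mxradius (n : nat) (A : 'M[laurent p]_n) : nat :=
  \max_(k < n) \max_(l < n) lradius (A k l).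

(* F(c)_i = sum_{j=-r}^{r} A_j c_{i+j} *)
Definition lca (n : nat) (A : 'M[laurent p]_n) (c : config n) : config n :=
  fun i => let r := mxradius A in
    \sum_(t < (r + r).+1)
      coefmx A (- ((t : nat)%:Z - r%:Z)) *m c (i + ((t : nat)%:Z - r%:Z)).

Definition mindiff (n : nat) (c c' : config n) : nat :=
  epsilon (inhabits 0%N)
    (fun k => (exists j : int, absz j = k /\ c j <> c' j) /\
              (forall j : int, c j <> c' j -> (k <= absz j)%N)).

Definition cdist (n : nat) (c c' : config n) : R :=
  if excluded_middle_informative (c = c') then R0
  else pow (Rinv 2) (mindiff c c').

Definition pos_expansive (n : nat) (F : config n -> config n) : Prop :=
  exists eps : R, Rlt R0 eps /\
    forall c c' : config n, c <> c' ->
      exists l : nat, Rle eps (cdist (iter l F c) (iter l F c')).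
End Laurent.

(* Main.v *)
Require Import Defs.
From Stdlib Require Import Reals ClassicalEpsilon Classical FunctionalExtensionality Lra.
From mathcomp Require Import all_boot all_algebra zify ring.
Set Implicit Arguments. Unset Strict Implicit. Unset Printing Implicit Defensive.
Import GRing.Theory.

Lemma minex (P : nat -> Prop) : (exists k, P k) -> exists k, P k /\ forall k', P k' -> (k <= k')%N.
Proof.
case=> k; elim/ltn_ind: k => k IH Pk.
case: (classic (exists k', (k' < k)%N /\ P k')) => [[k' [lt Pk']]|H].
  exact: IH lt Pk'.
exists k; split=> // k' Pk'; rewrite leqNgt; apply/negP => lt; apply: H; by exists k'.
Qed.

Section Metric.
Variables (p n : nat).
Implicit Types c : config p n.

Lemma mindiff_spec c c' : c <> c' ->
  (exists j, absz j = mindiff c c' /\ c j <> c' j) /\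
  forall j, c j <> c' j -> (mindiff c c' <= absz j)%N.
Proof.
move=> ne; rewrite /mindiff.
apply: (@epsilon_spec nat (inhabits 0%N) (fun k => (exists j, absz j = k /\ c j <> c' j) /\ forall j, c j <> c' j -> (k <= absz j)%N)).
have [j hj] : exists j, c j <> c' j.
  apply: NNPP => H; apply: ne; apply: functional_extensionality => j.
  by apply: NNPP => H'; apply: H; exists j.
have [k [[j' [e1 e2]] hk]] := minex (P := fun k => exists j, absz j = k /\ c j <> c' j)
  (ex_intro _ (absz j) (ex_intro _ j (conj erefl hj))).
exists k; split; first by exists j'.
by move=> j0 h0; apply: hk; exists j0.
Qed.

Lemma pow_half_anti (a b : nat) : (a <= b)%N -> Rle (pow (/2) b) (pow (/2) a).
Proof.
move=> /subnKC <-; rewrite pow_add.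
have h1 : Rle 0 (pow (/2) a) by apply: pow_le; lra.
have h2 : Rle (pow (/2) (b - a)) 1.
  rewrite -(pow1 (b - a)); apply: pow_incr; lra.
have h3 : Rle 0 (pow (/2) (b - a)) by apply: pow_le; lra.
nra.
Qed.

Lemma cdist_ge c c' j : c j <> c' j -> Rle (pow (/2) (absz j)) (cdist c c').
Proof.
move=> h; have ne : c <> c' by move=> e; apply: h; rewrite e.
rewrite /cdist; destruct (excluded_middle_informative _) => //.
apply: pow_half_anti; exact: (proj2 (mindiff_spec ne)).
Qed.

Lemma cdist_wit c c' eps : Rlt 0 eps -> Rle eps (cdist c c') ->
  exists j, c j <> c' j /\ Rle eps (pow (/2) (absz j)).
Proof.
move=> he; rewrite /cdist; destruct (excluded_middle_informative _) as [e|ne]=> hl; first by exfalso; apply: (Rlt_irrefl 0); apply: Rlt_le_trans hl.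
have [[j [e1 e2]] _] := mindiff_spec ne.
by exists j; rewrite e1.
Qed.

Definition local (K : config p n -> config p n) := exists s : nat,
  forall x y : config p n, forall N : nat,
  (forall j : int, (absz j <= N + s)%N -> x j = y j) ->
  forall j : int, (absz j <= N)%N -> K x j = K y j.

Lemma transfer (F G K : config p n -> config p n) :
  injective K -> local K -> (forall x, K (G x) = F (K x)) ->
  pos_expansive F -> pos_expansive G.
Proof.
move=> Kinj [s Kl] comm [eps [he H]].
exists (Rmult eps (pow (/2) s)); split.
  apply: Rmult_lt_0_compat => //; apply: pow_lt; lra.
move=> x x' ne.
have ne' : K x <> K x' by move=> e; apply: ne; apply: Kinj.
have [l hl] := H _ _ ne'.
exists l.
have itc : forall y, iter l F (K y) = K (iter l G y).
  by move=> y; elim: l {hl} => //= l ->; rewrite comm.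
rewrite !itc in hl.
have [j [hj hj2]] := cdist_wit he hl.
have [j' [hj' hj'2]] : exists j', iter l G x j' <> iter l G x' j' /\ (absz j' <= absz j + s)%N.
  apply: NNPP => HH; apply: hj; apply: (Kl _ _ (absz j)) => // j0 hj0.
  by apply: NNPP => HH'; apply: HH; exists j0.
apply: Rle_trans (cdist_ge hj').
apply: Rle_trans (pow_half_anti hj'2); rewrite pow_add.
apply: Rmult_le_compat_r => //; apply: pow_le; lra.
Qed.
End Metric.

Local Open Scope ring_scope.

Section Alg.
Variable p : nat.

Definition act (r : nat) (a : laurent p) (s : int -> 'F_p) (i : int) : 'F_p :=
  \sum_(t < (r + r).+1) lcoef a (- ((t : nat)%:Z - r%:Z)) * s (i + ((t : nat)%:Z - r%:Z)).

Lemma lca_entry n (M : 'M[laurent p]_n) (c : config p n) i k :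
  lca M c i k 0 = \sum_(m < n) act (mxradius M) (M k m) (fun i => c i m 0) i.
Proof.
rewrite /lca summxE /act.
under eq_bigr => t _ do rewrite mxE.
rewrite exchange_big /=; apply: eq_bigr => m _; apply: eq_bigr => t _.
by rewrite mxE.
Qed.

Lemma lcoef_lone m : lcoef (lone p) m = (m == 0)%:R.
Proof.
rewrite /lcoef /= addr0; case: m => [k|k] //=.
by rewrite coefC; case: k.
Qed.

Lemma lcoef_lzero m : lcoef (lzero p) m = 0.
Proof. by rewrite /lcoef /=; case: (m + 0) => k //; rewrite coef0. Qed.

Lemma lneg2 (a : laurent p) : lneg (lneg a) = a.
Proof. by case: a => s q; rewrite /lneg /= opprK. Qed.

Lemma act_lone r s i : act r (lone p) s i = s i.
Proof.
have hr : (r < (r+r).+1)%N by lia.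
rewrite /act (bigD1 (Ordinal hr)) //=.
rewrite subrr oppr0 lcoef_lone eqxx mul1r addr0 big1 ?addr0 // => t /eqP ne.
rewrite lcoef_lone; case: eqP => [e|]; last by rewrite mul0r.
exfalso; apply: ne; apply: val_inj => /=; lia.
Qed.

Lemma act_lzero r s i : act r (lzero p) s i = 0.
Proof. by rewrite /act big1 // => t _; rewrite lcoef_lzero mul0r. Qed.

Lemma act_ext r a s s' i : (forall j, s j = s' j) -> act r a s i = act r a s' i.
Proof. by move=> h; apply: eq_bigr => t _; rewrite h. Qed.

End Alg.

Lemma mxradius_tr p n (M : 'M[laurent p]_n) : mxradius M^T = mxradius M.
Proof.
rewrite /mxradius exchange_big; apply: eq_bigr => k _; apply: eq_bigr => l _.
by rewrite mxE.
Qed.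

Section Main.
Variables (p n' : nat) (alpha : 'I_n'.+1 -> laurent p).
Local Notation n := n'.+1.
Let C : 'M[laurent p]_n := companion (fun i => lneg (alpha i)).
Let A := C^T.
Let r := mxradius A.
Let F := lca A^T.
Let G := lca A.

Definition Vc (v : config p n) (m : nat) : int -> 'F_p := fun i => v i (inord m) 0.

Lemma Vc_ord (v : config p n) (m : 'I_n) : (fun i => v i m 0) = Vc v m.
Proof. by apply: functional_extensionality => i; rewrite /Vc inord_val. Qed.

Lemma G_formula v m i : (m < n)%N ->
  Vc (G v) m i = if m.+1 == n then \sum_(j < n) act r (alpha j) (Vc v j) i
                 else Vc v m.+1 i.
Proof.
move=> hm; rewrite /Vc /G lca_entry -/r.
under eq_bigr => j _ do rewrite Vc_ord /A /C mxE /companion mxE inordK // lneg2.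
case: eqP => [e|ne]; first by [].
have hm1 : (m.+1 < n)%N by move: hm; rewrite leq_eqVlt ltnS => /orP [/eqP e|] //; case: ne.
rewrite (bigD1 (inord m.+1)) //= inordK // eqxx act_lone /Vc big1 ?addr0 // => j hj.
case: eqP => [e|_]; last by rewrite act_lzero.
by move: hj; rewrite -e inord_val eqxx.
Qed.

Lemma F_formula w (k : 'I_n) i :
  F w i k 0 = act r (alpha k) (Vc w n') i + (if (0 < k)%N then Vc w k.-1 i else 0).
Proof.
rewrite /F lca_entry mxradius_tr -/r.
under eq_bigr => j _ do rewrite Vc_ord /A /C trmxK /companion mxE lneg2.
rewrite (bigD1 ord_max) //= eqxx.
congr (_ + _).
case: ifP => hk.
  have hk1 : (k.-1 < n)%N by case: k hk => [[|k] hk] //= _; lia.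
  rewrite (bigD1 (inord k.-1)) /=; last first.
    apply/eqP => /(congr1 val) /=; rewrite inordK //; case: k hk hk1 => [[|k] hk] //=; lia.
  rewrite inordK // ifN; last by case: k hk hk1 => [[|k] hk] //=; lia.
  rewrite prednK // eqxx act_lone big1 ?addr0 // => j /andP [hj1 hj2].
  rewrite ifN; last first.
    apply/negP => /eqP e; move: hj1; rewrite -(inj_eq val_inj) /= => /negP; apply; lia.
  case: eqP => [e|_]; last by rewrite act_lzero.
  by move: hj2; rewrite e /= inord_val eqxx.
rewrite big1 // => j hj.
rewrite ifN; last first.
  apply/negP => /eqP e; move: hj; rewrite -(inj_eq val_inj) /= => /negP; apply; lia.
case: eqP => [e|_]; last by rewrite act_lzero.
by move: hk; rewrite e.
Qed.


Definition K (v : config p n) : config p n := fun i =>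
  \col_(k < n) (Vc v (n' - k) i -
     \sum_(j < n | (k < j)%N) act r (alpha j) (Vc v (j - k.+1)) i).

Lemma VcK v m i : (m < n)%N ->
  Vc (K v) m i = Vc v (n' - m) i - \sum_(j < n | (m < j)%N) act r (alpha j) (Vc v (j - m.+1)) i.
Proof. by move=> hm; rewrite /Vc {1}/K mxE inordK. Qed.

Lemma Gc v m : (m.+1 < n)%N -> Vc (G v) m = Vc v m.+1.
Proof.
move=> hm; apply: functional_extensionality => i.
by rewrite G_formula ?ifN ?neq_ltn ?hm //; apply: ltnW.
Qed.

Lemma Gl v i : Vc (G v) n' i = \sum_(j < n) act r (alpha j) (Vc v j) i.
Proof. by rewrite G_formula ?eqxx. Qed.

Lemma KG v : K (G v) = F (K v).
Proof.
apply: functional_extensionality => i; apply/matrixP => k z; rewrite (ord1 z) {z}.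
rewrite F_formula {1}/K mxE.
have -> : Vc (K v) n' = Vc v 0.
  apply: functional_extensionality => x; rewrite VcK // subnn big_pred0 ?subr0 //.
  by move=> j; rewrite ltnNge -ltnS ltn_ord.
have -> : \sum_(j < n | (k < j)%N) act r (alpha j) (Vc (G v) (j - k.+1)) i =
    \sum_(j < n | (k < j)%N) act r (alpha j) (Vc v (j - k)) i.
  apply: eq_bigr => j hj; have hj' := ltn_ord j; rewrite Gc; last lia.
  by rewrite subnSK.
case: (posnP k) => [k0|kpos].
  rewrite k0 subn0 Gl (bigD1 (@ord0 n')) //=.
  under [X in _ - X]eq_bigr => j _ do rewrite subn0.
  rewrite (eq_bigl (fun j : 'I_n => j != ord0) (P1 := fun j : 'I_n => (0 < j)%N)) ?addrK; last first.
    by move=> j; rewrite -(inj_eq val_inj) /= -lt0n.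
  rewrite (_ : ord0 = k); last by apply: val_inj; rewrite /= k0.
  by rewrite addr0.
have k1 : (k.-1 < n)%N by case: k kpos => [[|k] hk] //= _; lia.
rewrite VcK //.
rewrite [X in _ + (_ - X)](bigD1 k) /=; last by case: k kpos {k1} => [[|k] hk] //= _; lia.
rewrite Gc; last by case: k kpos {k1} => [[|k] hk] //= _; lia.
rewrite prednK // subnn.
rewrite (eq_bigl (fun j : 'I_n => (k < j)%N) (P1 := fun j : 'I_n => (k <= j)%N && (j != k))); last first.
  move=> j; rewrite -(inj_eq val_inj) /=; case: k kpos {k1} => [[|k] hk] //= _; lia.
have -> : ((n' - k).+1 = n' - k.-1)%N by case: k kpos {k1} => [[|k] hk] //= _; lia.
ring.
Qed.


Lemma act_loc (a : laurent p) s s' (N : nat) i :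
  (forall j : int, (absz j <= N + r)%N -> s j = s' j) -> (absz i <= N)%N ->
  act r a s i = act r a s' i.
Proof.
move=> h hi; apply: eq_bigr => t _; rewrite h //.
have := ltn_ord t; lia.
Qed.

Lemma K_inj : injective K.
Proof.
move=> v v' e.
have H : forall m, (m < n)%N -> Vc v m = Vc v' m.
  elim/ltn_ind => m IH hm; apply: functional_extensionality => i.
  have e1 : Vc (K v) (n' - m) i = Vc (K v') (n' - m) i by rewrite e.
  rewrite !VcK ?subKn // in e1; try lia.
  have e2 : \sum_(j < n | (n' - m < j)%N) act r (alpha j) (Vc v (j - (n' - m).+1)) i =
            \sum_(j < n | (n' - m < j)%N) act r (alpha j) (Vc v' (j - (n' - m).+1)) i.
    apply: eq_bigr => j hj; rewrite IH //; have := ltn_ord j; lia.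
  by move: e1; rewrite e2 => /addIr.
apply: functional_extensionality => i; apply/matrixP => k z; rewrite (ord1 z).
by have := congr1 (fun f => f i) (H k (ltn_ord k)); rewrite /Vc inord_val.
Qed.

Lemma K_loc : local K.
Proof.
exists r => x y N h i hi; apply/matrixP => k z; rewrite (ord1 z) !mxE.
have hv : forall m, forall j : int, (absz j <= N + r)%N -> Vc x m j = Vc y m j.
  by move=> m j hj; rewrite /Vc h.
rewrite hv; last lia.
congr (_ - _); apply: eq_bigr => j _; apply: (@act_loc _ _ _ N) => // j' hj'.
exact: hv.
Qed.

Fixpoint Wf (c : config p n) (M : nat) : nat -> int -> 'F_p :=
  match M with
  | 0 => fun _ _ => 0
  | M'.+1 => fun m => if (m < M')%N then Wf c M' m else
      fun i => c i (inord (n' - m)) 0 +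
        \sum_(j < n | (n' - m < j)%N) act r (alpha j) (Wf c M' (j + m - n)) i
  end.

Lemma Wf_stab c M m : (m < M)%N -> Wf c M m = Wf c m.+1 m.
Proof.
elim: M => // M IH; rewrite ltnS leq_eqVlt => /orP [/eqP ->|hm] //=.
by rewrite hm IH.
Qed.

Lemma Wf_eq c m : (m < n)%N -> Wf c n m = fun i => c i (inord (n' - m)) 0 +
        \sum_(j < n | (n' - m < j)%N) act r (alpha j) (Wf c n (j + m - n)) i.
Proof.
move=> hm; rewrite Wf_stab // [Wf c m.+1 m]/= ltnn; apply: functional_extensionality => i.
congr (_ + _); apply: eq_bigr => j hj.
have hj' := ltn_ord j.
rewrite (@Wf_stab c m (j + m - n)); last lia.
by rewrite (@Wf_stab c n (j + m - n)) //; lia.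
Qed.

Definition L (c : config p n) : config p n := fun i => \col_(k < n) Wf c n k i.

Lemma VcL c m : (m < n)%N -> Vc (L c) m = Wf c n m.
Proof.
by move=> hm; apply: functional_extensionality => i; rewrite /Vc /L mxE inordK.
Qed.

Lemma KL c : K (L c) = c.
Proof.
apply: functional_extensionality => i; apply/matrixP => k z; rewrite (ord1 z) {z}.
have hk := ltn_ord k.
rewrite /K mxE VcL; last lia.
rewrite Wf_eq; last lia.
rewrite subKn; last lia.
rewrite inord_val.
have -> : \sum_(j < n | (k < j)%N) act r (alpha j) (Vc (L c) (j - k.+1)) i =
          \sum_(j < n | (k < j)%N) act r (alpha j) (Wf c n (j + (n' - k) - n)) i.
  apply: eq_bigr => j hj; have hj' := ltn_ord j; rewrite VcL; last lia.
  by congr act; congr Wf; lia.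
by rewrite addrK.
Qed.

Lemma Wf_loc m : (m < n)%N -> forall c c' (N : nat),
  (forall j : int, (absz j <= N + m * r)%N -> c j = c' j) ->
  forall i : int, (absz i <= N)%N -> Wf c n m i = Wf c' n m i.
Proof.
elim/ltn_ind: m => m IH hm c c' N h i hi.
rewrite !Wf_eq //; congr (_ + _).
  by rewrite h //; lia.
apply: eq_bigr => j hj; have hj' := ltn_ord j.
apply: (@act_loc _ _ _ N) => // j' hj2.
have hidx : (j + m - n < m)%N by lia.
apply: (IH _ hidx _ _ _ (N + r)); [lia | | exact: hj2].
move=> j0 hj0; apply: h.
have : ((j + m - n).+1 * r <= m * r)%N by apply: leq_mul.
rewrite mulSn; lia.
Qed.

Lemma L_loc : local L.
Proof.
exists (n * r) => x y N h i hi; apply/matrixP => k z; rewrite (ord1 z) !mxE.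
have hk := ltn_ord k.
apply: (Wf_loc hk (N := N)) => // j hj; apply: h.
have : (k * r <= n * r)%N by apply: leq_mul => //; apply: ltnW.
lia.
Qed.

Lemma L_inj : injective L.
Proof. by move=> c c' e; rewrite -(KL c) -(KL c') e. Qed.

Lemma LF c : L (F c) = G (L c).
Proof. by apply: K_inj; rewrite KG !KL. Qed.

Lemma main_equiv : pos_expansive G <-> pos_expansive F.
Proof.
split.
  exact: (transfer L_inj L_loc LF).
exact: (transfer K_inj K_loc KG).
Qed.

End Main.


Theorem lemma11 (p n : nat) (hp : prime p) (hn : (1 < n)%N)
  (alpha : 'I_n -> laurent p) :
  let A : 'M[laurent p]_n := (companion (fun i => lneg (alpha i)))^T in
  pos_expansive (lca A) <-> pos_expansive (lca A^T).
Proof.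
case: n hn alpha => // n' _ alpha.
exact: (main_equiv alpha).
Qed.
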